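(* Let $\mathbf{V}\in\mathbb{R}^{N\times N}$ with $\mathbf{1}_N^\top\mathbf{V}=\mathbf{1}_N^\top$ and $\mathbf{V}\boldsymbol\mu=\boldsymbol\mu$, and $\mathbf{A}\in\mathbb{R}^{T\times N}$ with $\mathbf{1}_T^\top\mathbf{A}=\mathbf{1}_N^\top$. Then $$\mathbb{E}\hat\nabla_{\mathbf{V}}l=\|\mathbf{A}\|_\mu^2(\mathbf{V}-\boldsymbol\mu\mathbf{1}^\top)-\langle\mathbf{Q},\mathbf{A}\rangle_\mu(\mathbf{P}-\boldsymbol\mu\mathbf{1}^\top),$$ and for each $k\in[N]$, $$\mathbb{E}\hat\nabla_{\mathbf{a}^{(k)}}l=(\|\mathbf{V}\|_\mu^2-\|\boldsymbol\mu\|^2)\Big(\mathbf{a}^{(k)}-\frac{\mathbf{1}}{T}\Big)-(\langle\mathbf{V},\mathbf{P}\rangle_\mu-\|\boldsymbol\mu\|^2)\Big(\mathbf{q}^{(k)}-\frac{\mathbf{1}}{T}\Big).$$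
   Context: Let $\mathbf{P}\in\mathbb{R}^{N\times N}$ have nonnegative entries with columns summing to $1$, and let $\boldsymbol\mu\in\mathbb{R}^N$ be a probability vector with positive entries and $\mathbf{P}\boldsymbol\mu=\boldsymbol\mu$. Let $\mathbf{Q}=(\mathbf{q}^{(1)},\dots,\mathbf{q}^{(N)})\in\mathbb{R}^{T\times N}$ with each $\mathbf{q}^{(k)}$ a probability vector. Data: $x_1,\dots,x_{T+1}$ i.i.d. with law $\boldsymbol\mu$, and $x_o$ with $\Pr(x_o=n\mid x_{T+1}=k,x_1,\dots,x_T)=\sum_tq^{(k)}_tP_{n,x_t}$; $\mathbf{X}=(\mathbf{e}_{x_1},\dots,\mathbf{e}_{x_T})$. Loss $l=\frac12\|\mathbf{e}_{x_o}-\mathbf{V}\mathbf{X}\mathbf{A}\mathbf{e}_{x_{T+1}}\|^2$, $\mathbf{a}^{(k)}$ the $k$-th column of $\mathbf{A}$. Preconditioned gradients: $\hat\nabla_{\mathbf{V}}l=(\mathbf{I}_N-\mathbf{1}_N\mathbf{1}_N^\top/N)(\nabla_{\mathbf{V}}l)\operatorname{diag}(1/\boldsymbol\mu)(\mathbf{I}_N-\boldsymbol\mu\boldsymbol\mu^\top/\|\boldsymbol\mu\|^2)$ and $\hat\nabla_{\mathbf{a}^{(k)}}l=\frac{1}{\mu_k}(\mathbf{I}_T-\mathbf{1}_T\mathbf{1}_T^\top/T)\nabla_{\mathbf{a}^{(k)}}l$. $\mathbb{E}$ is expectation over the data with $\mathbf{V},\mathbf{A}$ fixed. $\langle\mathbf{M},\mathbf{M}'\rangle_\mu=\operatorname{Tr}(\mathbf{M}\operatorname{diag}(\boldsymbol\mu)\mathbf{M}'^\top)$,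 $\|\mathbf{M}\|_\mu^2=\langle\mathbf{M},\mathbf{M}\rangle_\mu$; $\|\boldsymbol\mu\|$ Euclidean. *)

(* Defs.v *)
From HB Require Import structures.
From mathcomp Require Import all_boot all_order all_algebra.
Set Implicit Arguments. Unset Strict Implicit. Unset Printing Implicit Defensive.
Import Order.TTheory GRing.Theory Num.Theory.
Local Open Scope ring_scope.

Section Defs.
Variable R : realFieldType.

Definition ones (n : nat) : 'cV[R]_n := const_mx 1.

Definition ecol (n : nat) (i : 'I_n) : 'cV[R]_n := delta_mx i 0.

(* X = (e_{x_1}, ..., e_{x_T}) for a context xs : t |-> x_t *)
Definition Xmat (N T : nat) (xs : {ffun 'I_T -> 'I_N}) : 'M[R]_(N, T) :=
  \matrix_(i < N, t < T) (xs t == i)%:R.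

(* residual e_{x_o} - V X A e_{x_{T+1}}, with k = x_{T+1}, o = x_o *)
Definition resid (N T : nat) (V : 'M[R]_N) (A : 'M[R]_(T, N))
  (xs : {ffun 'I_T -> 'I_N}) (k o : 'I_N) : 'cV[R]_N :=
  ecol o - V *m Xmat xs *m col k A.

Definition loss (N T : nat) (V : 'M[R]_N) (A : 'M[R]_(T, N))
  (xs : {ffun 'I_T -> 'I_N}) (k o : 'I_N) : R :=
  2^-1 * \sum_i (resid V A xs k o i 0) ^+ 2.

Definition gradV (N T : nat) (V : 'M[R]_N) (A : 'M[R]_(T, N))
  (xs : {ffun 'I_T -> 'I_N}) (k o : 'I_N) : 'M[R]_N :=
  - (resid V A xs k o *m (Xmat xs *m col k A)^T).

(* gradient of loss w.r.t. column a^(j) of A: the loss only involves column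
   k = x_{T+1}, so it is -(V X)^T (e_o - V X a^(k)) if j = k and 0 otherwise *)
Definition grada (N T : nat) (V : 'M[R]_N) (A : 'M[R]_(T, N))
  (xs : {ffun 'I_T -> 'I_N}) (k o : 'I_N) (j : 'I_N) : 'cV[R]_T :=
  if k == j then - ((V *m Xmat xs)^T *m resid V A xs k o) else 0.

Definition sqnorm (n : nat) (v : 'cV[R]_n) : R := \sum_i v i 0 ^+ 2.

Definition precV (N : nat) (mu : 'cV[R]_N) (G : 'M[R]_N) : 'M[R]_N :=
  (1%:M - (N%:R)^-1 *: (ones N *m (ones N)^T)) *m G
  *m diag_mx (\row_i (mu i 0)^-1)
  *m (1%:M - (sqnorm mu)^-1 *: (mu *m mu^T)).

Definition preca (N T : nat) (mu : 'cV[R]_N) (k : 'I_N) (g : 'cV[R]_T)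
  : 'cV[R]_T :=
  (mu k 0)^-1 *: ((1%:M - (T%:R)^-1 *: (ones T *m (ones T)^T)) *m g).

(* joint probability of (x_1..x_T, x_{T+1} = k, x_o = o) *)
Definition dprob (N T : nat) (P : 'M[R]_N) (mu : 'cV[R]_N) (Q : 'M[R]_(T, N))
  (xs : {ffun 'I_T -> 'I_N}) (k o : 'I_N) : R :=
  (\prod_t mu (xs t) 0) * mu k 0 * (\sum_t Q t k * P o (xs t)).

Definition Expect (N T m n : nat) (P : 'M[R]_N) (mu : 'cV[R]_N)
  (Q : 'M[R]_(T, N))
  (F : {ffun 'I_T -> 'I_N} -> 'I_N -> 'I_N -> 'M[R]_(m, n)) : 'M[R]_(m, n) :=
  \sum_(xs : {ffun 'I_T -> 'I_N}) \sum_(k < N) \sum_(o < N)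
     dprob P mu Q xs k o *: F xs k o.

Definition mu_ip (m N : nat) (mu : 'cV[R]_N) (M M' : 'M[R]_(m, N)) : R :=
  \tr (M *m diag_mx mu^T *m M'^T).

End Defs.

(* Main.v *)
Require Import Defs.
From HB Require Import structures.
From mathcomp Require Import all_boot all_order all_algebra ring.
Import Order.TTheory GRing.Theory Num.Theory.
Local Open Scope ring_scope.


Lemma prod_sum_ffun (R : comRingType) (T N : nat) (F : 'I_T -> 'I_N -> R) :
  \sum_(xs : {ffun 'I_T -> 'I_N}) \prod_t F t (xs t) = \prod_t \sum_i F t i.
Proof. by rewrite bigA_distr_bigA. Qed.

Lemma E1 (R : comRingType) (T N : nat) (m : 'I_N -> R) (f : 'I_N -> R) (t : 'I_T) :
  \sum_i m i = 1 ->
  \sum_(xs : {ffun 'I_T -> 'I_N}) (\prod_u m (xs u)) * f (xs t) = \sum_i m i * f i.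
Proof.
move=> Hm.
pose F := fun (u : 'I_T) (i : 'I_N) => if u == t then m i * f i else m i.
transitivity (\sum_(xs : {ffun 'I_T -> 'I_N}) \prod_u F u (xs u)).
  apply: eq_bigr => xs _.
  rewrite (bigD1 t) //= [in RHS](bigD1 t) //= /F eqxx.
  rewrite mulrAC; congr (_ * _); apply: eq_bigr => u /negbTE ->; done.
rewrite prod_sum_ffun (bigD1 t) //=.
rewrite [X in _ * X]big1 ?mulr1 /F ?eqxx //.
by move=> u /negbTE ->.
Qed.

Lemma E2 (R : comRingType) (T N : nat) (m : 'I_N -> R) (g h : 'I_N -> R) (t s : 'I_T) :
  \sum_i m i = 1 -> t != s ->
  \sum_(xs : {ffun 'I_T -> 'I_N}) (\prod_u m (xs u)) * (g (xs t) * h (xs s))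
  = (\sum_i m i * g i) * (\sum_i m i * h i).
Proof.
move=> Hm Hts.
pose F := fun (u : 'I_T) (i : 'I_N) =>
  if u == t then m i * g i else if u == s then m i * h i else m i.
have Hst : (s == t) = false by rewrite eq_sym; apply/negbTE.
have Hst' : s != t by rewrite Hst.
transitivity (\sum_(xs : {ffun 'I_T -> 'I_N}) \prod_u F u (xs u)).
  apply: eq_bigr => xs _.
  symmetry; rewrite (bigD1 t) //= (bigD1 s) //= /F eqxx Hst eqxx.
  rewrite [\prod_u m (xs u)](bigD1 t) //= [\prod_(i | i != t) m (xs i)](bigD1 s) //=.
  have -> : \prod_(i | (i != t) && (i != s)) (if i == t then m (xs i) * g (xs i)
            else if i == s then m (xs i) * h (xs i) else m (xs i)) =
            \prod_(i | (i != t) && (i != s)) m (xs i).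
    by apply: eq_bigr => u /andP [/negbTE -> /negbTE ->].
  by set p := \prod_(_ | _) _; ring.
rewrite prod_sum_ffun (bigD1 t) //= (bigD1 s) //=.
rewrite [X in _ * (_ * X)]big1 ?mulr1 /F ?eqxx ?Hst //.
by move=> u /andP [/negbTE -> /negbTE ->].
Qed.

Lemma E3 (R : comRingType) (T N : nat) (m : 'I_N -> R) (h : 'I_N -> 'I_N -> R) (t s : 'I_T) :
  \sum_i m i = 1 ->
  \sum_(xs : {ffun 'I_T -> 'I_N}) (\prod_u m (xs u)) * h (xs t) (xs s)
  = if t == s then \sum_i m i * h i i else \sum_i m i * \sum_j m j * h i j.
Proof.
move=> Hm; case: eqP => [<-|/eqP Hts].
  exact: (@E1 _ _ _ m (fun i => h i i) t Hm).
transitivity (\sum_i \sum_(xs : {ffun 'I_T -> 'I_N}) (\prod_u m (xs u)) *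
   (((xs t == i)%:R : R) * h i (xs s))).
  rewrite exchange_big /=; apply: eq_bigr => xs _.
  rewrite -mulr_sumr; congr (_ * _); rewrite (bigD1 (xs t)) //= eqxx mul1r big1 ?addr0 //.
  by move=> i /negbTE; rewrite eq_sym => ->; rewrite mul0r.
apply: eq_bigr => i _; rewrite (@E2 _ _ _ m (fun a => (a == i)%:R) (h i) t s Hm Hts); congr (_ * _).
rewrite (bigD1 i) //= eqxx mulr1 big1 ?addr0 //.
by move=> j /negbTE ->; rewrite mulr0.
Qed.

Lemma sum_ind (R : comRingType) n (x : 'I_n) (f : 'I_n -> R) :
  \sum_a (x == a)%:R * f a = f x.
Proof.
rewrite (bigD1 x) //= eqxx mul1r big1 ?addr0 //.
by move=> a; rewrite eq_sym => /negbTE ->; rewrite mul0r.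
Qed.

Lemma Xmat_E (R : realFieldType) N T (xs : {ffun 'I_T -> 'I_N}) i t :
  Xmat R xs i t = (xs t == i)%:R.
Proof. by rewrite /Xmat mxE. Qed.

Lemma split_if (R : comRingType) T (B : 'I_T -> 'I_T -> R) (c d : R) :
  \sum_t \sum_s B t s * (if t == s then c else d)
  = (\sum_t B t t) * c + (\sum_t \sum_s B t s - \sum_t B t t) * d.
Proof.
have H : forall t s, B t s * (if t == s then c else d)
   = B t s * d + (t == s)%:R * (B t s * (c - d)).
  by move=> t s; case: eqP => _; rewrite ?mul1r ?mul0r ?addr0 //; ring.
under eq_bigr do under eq_bigr do rewrite H.
under eq_bigr do rewrite big_split /= sum_ind.
rewrite big_split /= -!mulr_suml.
under eq_bigr do rewrite -mulr_suml.
rewrite -mulr_suml. ring.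
Qed.

Lemma quadE (R : comRingType) N (mu : 'cV[R]_N) (M : 'M[R]_N) :
  (mu^T *m M *m mu) 0 0 = \sum_i mu i 0 * \sum_j mu j 0 * M i j.
Proof.
rewrite !mxE; under eq_bigr do rewrite !mxE mulr_suml.
rewrite exchange_big; apply: eq_bigr => i _; rewrite mulr_sumr.
by apply: eq_bigr => j _; rewrite !mxE; ring.
Qed.

Lemma MMt (R : realFieldType) N T (mu : 'cV[R]_N) (M : 'M[R]_N) :
  \sum_i mu i 0 = 1 ->
  \sum_(xs : {ffun 'I_T -> 'I_N}) (\prod_u mu (xs u) 0) *: ((Xmat R xs)^T *m M *m Xmat R xs)
  = (mu^T *m M *m mu) 0 0 *: (ones R T *m (ones R T)^T)
    + (\sum_i mu i 0 * M i i - (mu^T *m M *m mu) 0 0) *: 1%:M.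
Proof.
move=> Hmu; rewrite quadE; apply/matrixP => t s; rewrite summxE !mxE.
transitivity (\sum_(xs : {ffun 'I_T -> 'I_N}) (\prod_u mu (xs u) 0) * M (xs t) (xs s)).
  apply: eq_bigr => xs _; rewrite !mxE; congr (_ * _).
  under eq_bigr do rewrite !mxE.
  under eq_bigr do under eq_bigr do rewrite !mxE.
  under eq_bigr do rewrite mulrC.
  under eq_bigr => i _ do rewrite (@sum_ind _ _ (xs t) (fun a => M a i)).
  by rewrite (@sum_ind _ _ (xs s) (fun a => M (xs t) a)).
rewrite (@E3 _ _ _ (fun i => mu i 0) M t s Hmu).
rewrite big_ord1 !mxE mul1r.
case: eqP => _ /=; rewrite ?mulr1 ?mulr0; ring.
Qed.

Lemma sum_indr (R : comRingType) n (x : 'I_n) (f : 'I_n -> R) :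
  \sum_a f a * (a == x)%:R = f x.
Proof.
rewrite -(@sum_ind _ _ x f); apply: eq_bigr => a _; by rewrite mulrC eq_sym.
Qed.

Lemma MMx (R : realFieldType) N T (mu : 'cV[R]_N) (B : 'M[R]_T) :
  \sum_i mu i 0 = 1 ->
  \sum_(xs : {ffun 'I_T -> 'I_N}) (\prod_u mu (xs u) 0) *: (Xmat R xs *m B *m (Xmat R xs)^T)
  = (\sum_t \sum_s B t s - \tr B) *: (mu *m mu^T) + \tr B *: diag_mx mu^T.
Proof.
move=> Hmu; apply/matrixP => i j; rewrite summxE !mxE.
have Hts : forall t s, \sum_(xs : {ffun 'I_T -> 'I_N}) (\prod_u mu (xs u) 0) *
     (((xs t == i)%:R : R) * (xs s == j)%:R)
   = if t == s then mu i 0 * (i == j)%:R else mu i 0 * mu j 0.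
  move=> t s.
  rewrite (@E3 _ _ _ (fun i => mu i 0) (fun a b => ((a == i)%:R : R) * (b == j)%:R) t s Hmu).
  case: (t == s).
    under eq_bigr do rewrite mulrA mulrAC.
    by rewrite (@sum_indr _ _ i (fun a => mu a 0 * (a == j)%:R)).
  under eq_bigr => a _ do under eq_bigr do rewrite mulrA.
  under eq_bigr => a _ do rewrite (@sum_indr _ _ j (fun b => mu b 0 * (a == i)%:R)).
  under eq_bigr do rewrite mulrCA mulrA.
  by rewrite (@sum_indr _ _ i (fun a => mu j 0 * mu a 0)) mulrC.
transitivity (\sum_(xs : {ffun 'I_T -> 'I_N}) (\prod_u mu (xs u) 0) *
   \sum_t \sum_s B t s * (((xs t == i)%:R : R) * (xs s == j)%:R)).
  apply: eq_bigr => xs _; rewrite !mxE; congr (_ * _).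
  under eq_bigr do rewrite !mxE.
  under eq_bigr do rewrite mulr_suml; rewrite exchange_big.
  apply: eq_bigr => t _; apply: eq_bigr => s _; rewrite Xmat_E; ring.
transitivity (\sum_t \sum_s B t s * (if t == s then mu i 0 * (i == j)%:R else mu i 0 * mu j 0)).
  under eq_bigr do rewrite mulr_sumr; rewrite exchange_big; apply: eq_bigr => t _.
  under eq_bigr do rewrite mulr_sumr; rewrite exchange_big; apply: eq_bigr => s _.
  rewrite -Hts mulr_sumr; apply: eq_bigr => xs _; ring.
rewrite split_if big_ord1 !mxE /mxtrace -mulr_natr; ring.
Qed.


Lemma sum_o_dprob (R : realFieldType) N T (P : 'M[R]_N) mu (Q : 'M[R]_(T, N)) xs k :
  (forall j, \sum_i P i j = 1) -> (forall k, \sum_t Q t k = 1) ->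
  \sum_o dprob P mu Q xs k o = (\prod_t mu (xs t) 0) * mu k 0.
Proof.
move=> HP1 HQ1; rewrite /dprob -big_distrr /= [X in _ * X](_ : _ = 1) ?mulr1 //.
rewrite exchange_big /=.
under eq_bigr do rewrite -mulr_sumr HP1 mulr1.
exact: HQ1.
Qed.

Lemma sum_o_ecol (R : realFieldType) N T (P : 'M[R]_N) mu (Q : 'M[R]_(T, N)) xs k :
  \sum_o dprob P mu Q xs k o *: ecol R o
  = ((\prod_t mu (xs t) 0) * mu k 0) *: (P *m Xmat R xs *m col k Q).
Proof.
apply/matrixP => i z; rewrite {z}(ord1 z) summxE /ecol.
under [LHS]eq_bigr do rewrite !mxE eqxx andbT eq_sym.
rewrite (@sum_indr _ _ i (fun o => dprob P mu Q xs k o)) /dprob [RHS]mxE.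
congr (_ * _); rewrite [RHS]mxE; apply: eq_bigr => t _.
rewrite mulrC; congr (_ * _); last by rewrite mxE.
rewrite [RHS]mxE.
under [RHS]eq_bigr do rewrite Xmat_E eq_sym.
by rewrite (@sum_indr _ _ (xs t) (fun b => P i b)).
Qed.

Lemma sum_o_grad (R : realFieldType) N T (P : 'M[R]_N) mu (Q : 'M[R]_(T, N)) V A xs k :
  (forall j, \sum_i P i j = 1) -> (forall k, \sum_t Q t k = 1) ->
  \sum_o dprob P mu Q xs k o *: gradV V A xs k o
  = ((\prod_t mu (xs t) 0) * mu k 0) *:
     (V *m (Xmat R xs *m (col k A *m (col k A)^T) *m (Xmat R xs)^T)
      - P *m (Xmat R xs *m (col k Q *m (col k A)^T) *m (Xmat R xs)^T)).
Proof.
move=> HP1 HQ1.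
have Hg : forall o, gradV V A xs k o = V *m Xmat R xs *m col k A *m (Xmat R xs *m col k A)^T
     - ecol R o *m (Xmat R xs *m col k A)^T.
  by move=> o; rewrite /gradV /resid mulmxBl opprB.
under [LHS]eq_bigr do rewrite Hg scalerBr.
rewrite sumrB -scaler_suml sum_o_dprob //.
have -> : \sum_o dprob P mu Q xs k o *: (ecol R o *m (Xmat R xs *m col k A)^T)
   = (\sum_o dprob P mu Q xs k o *: ecol R o) *m (Xmat R xs *m col k A)^T.
  by rewrite mulmx_suml; apply: eq_bigr => o _; rewrite scalemxAl.
rewrite sum_o_ecol -scalemxAl -scalerBr; congr (_ *: _).
by rewrite !trmx_mul !mulmxA.
Qed.

Lemma sum_xs_scale (R : realFieldType) N T (c : R) (F : {ffun 'I_T -> 'I_N} -> R)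
  (G1 G2 : {ffun 'I_T -> 'I_N} -> 'M[R]_N) (V P : 'M[R]_N) :
  \sum_xs (F xs * c) *: (V *m G1 xs - P *m G2 xs)
  = c *: (V *m (\sum_xs F xs *: G1 xs) - P *m (\sum_xs F xs *: G2 xs)).
Proof.
rewrite !mulmx_sumr -sumrB scaler_sumr; apply: eq_bigr => xs _.
by rewrite mulrC -scalerA -!scalemxAr scalerBr.
Qed.

Lemma outer_sum (R : realFieldType) T (x y : 'cV[R]_T) :
  \sum_t x t 0 = 1 -> \sum_t y t 0 = 1 ->
  \sum_t \sum_s (x *m y^T) t s = 1.
Proof.
move=> Hx Hy.
transitivity (\sum_t x t 0 * \sum_s y s 0); last by rewrite Hy -big_distrl /= mulr1 Hx.
apply: eq_bigr => t _; rewrite mulr_sumr; apply: eq_bigr => s _.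
by rewrite mxE big_ord1 mxE.
Qed.

Lemma outer_tr (R : realFieldType) T (x y : 'cV[R]_T) :
  \tr (x *m y^T) = \sum_t x t 0 * y t 0.
Proof. by apply: eq_bigr => t _; rewrite mxE big_ord1 mxE. Qed.

Lemma mu_ipE (R : realFieldType) m N (mu : 'cV[R]_N) (M M' : 'M[R]_(m, N)) :
  mu_ip mu M M' = \sum_k mu k 0 * \sum_t M t k * M' t k.
Proof.
rewrite /mu_ip /mxtrace.
under eq_bigr do rewrite mxE.
rewrite exchange_big /=; apply: eq_bigr => k _.
rewrite mulr_sumr; apply: eq_bigr => t _.
by rewrite mul_mx_diag !mxE; ring.
Qed.

Lemma MMxV (R : realFieldType) N T (mu : 'cV[R]_N) (M : 'M[R]_N) (B : 'M[R]_T) :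
  \sum_i mu i 0 = 1 -> M *m mu = mu -> \sum_t \sum_s B t s = 1 ->
  M *m (\sum_(xs : {ffun 'I_T -> 'I_N}) (\prod_u mu (xs u) 0) *: (Xmat R xs *m B *m (Xmat R xs)^T))
  = (1 - \tr B) *: (mu *m mu^T) + \tr B *: (M *m diag_mx mu^T).
Proof.
move=> Hmu HM HB; rewrite MMx // HB mulmxDr -!scalemxAr mulmxA HM //.
Qed.

Lemma colsum (R : realFieldType) T N (A : 'M[R]_(T, N)) k :
  (const_mx 1 : 'cV[R]_T)^T *m A = (const_mx 1 : 'cV[R]_N)^T -> \sum_t A t k = 1.
Proof.
move=> H; have := congr1 (fun M : 'rV[R]_N => M 0 k) H => /=.
rewrite !mxE => <-; apply: eq_bigr => t _; by rewrite !mxE mul1r.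
Qed.

Lemma E0V (R : realFieldType) (N T : nat)
  (P : 'M[R]_N) (mu : 'cV[R]_N) (Q : 'M[R]_(T, N))
  (V : 'M[R]_N) (A : 'M[R]_(T, N))
  (HP1 : forall j, \sum_i P i j = 1)
  (Hmu1 : \sum_i mu i 0 = 1)
  (HPmu : P *m mu = mu)
  (HQ1 : forall k, \sum_t Q t k = 1)
  (HVmu : V *m mu = mu)
  (HA1 : (ones R T)^T *m A = (ones R N)^T) :
  Expect P mu Q (fun xs k o => gradV V A xs k o)
  = mu_ip mu A A *: (V *m diag_mx mu^T - mu *m mu^T)
    - mu_ip mu Q A *: (P *m diag_mx mu^T - mu *m mu^T).
Proof.
rewrite /Expect exchange_big /=.
under [LHS]eq_bigr => k _ do under eq_bigr => xs _ do rewrite sum_o_grad //.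
under [LHS]eq_bigr => k _ do
  rewrite (@sum_xs_scale _ _ _ (mu k 0) (fun xs => \prod_t mu (xs t) 0)).
have HA : forall k, \sum_t (col k A) t 0 = 1.
  by move=> k; rewrite -(@colsum _ _ _ A k HA1); apply: eq_bigr => t _; rewrite mxE.
have HQ : forall k, \sum_t (col k Q) t 0 = 1.
  by move=> k; rewrite -(HQ1 k); apply: eq_bigr => t _; rewrite mxE.
under [LHS]eq_bigr => k _ do
  rewrite (MMxV _ _ _ _ _ _ Hmu1 HVmu (outer_sum _ _ _ _ (HA k) (HA k)))
          (MMxV _ _ _ _ _ _ Hmu1 HPmu (outer_sum _ _ _ _ (HQ k) (HA k))) !outer_tr.
rewrite !mu_ipE.
apply/matrixP => i j; rewrite summxE.
under [LHS]eq_bigr do rewrite !mxE.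
rewrite !mxE.
set x := \sum_j0 mu i j0 * mu^T j0 j.
set y := \sum_j0 V i j0 * diag_mx mu^T j0 j.
set z := \sum_j0 P i j0 * diag_mx mu^T j0 j.
transitivity (\sum_k ((mu k 0 * \sum_t A t k * A t k) * (y - x)
                     - (mu k 0 * \sum_t Q t k * A t k) * (z - x))).
  apply: eq_bigr => k _.
  have -> : \sum_t col k A t 0 * col k A t 0 = \sum_t A t k * A t k.
    by apply: eq_bigr => t _; rewrite !mxE.
  have -> : \sum_t col k Q t 0 * col k A t 0 = \sum_t Q t k * A t k.
    by apply: eq_bigr => t _; rewrite !mxE.
  ring.
by rewrite sumrB -!mulr_suml.
Qed.

Lemma precV_sum (R : realFieldType) N (mu : 'cV[R]_N) (I : finType) (F : I -> 'M[R]_N) :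
  precV mu (\sum_i F i) = \sum_i precV mu (F i).
Proof. by rewrite /precV mulmx_sumr !mulmx_suml. Qed.

Lemma precV_scale (R : realFieldType) N (mu : 'cV[R]_N) c (G : 'M[R]_N) :
  precV mu (c *: G) = c *: precV mu G.
Proof. by rewrite /precV -scalemxAr -!scalemxAl. Qed.

Lemma Expect_precV (R : realFieldType) N T (P : 'M[R]_N) mu (Q : 'M[R]_(T, N)) F :
  Expect P mu Q (fun xs k o => precV mu (F xs k o)) = precV mu (Expect P mu Q F).
Proof.
rewrite /Expect precV_sum; apply: eq_bigr => xs _.
rewrite precV_sum; apply: eq_bigr => k _.
rewrite precV_sum; apply: eq_bigr => o _.
by rewrite precV_scale.
Qed.

Lemma fixL (R : realFieldType) n m c (X : 'M[R]_(n, m)) :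
  (ones R n)^T *m X = 0 -> (1%:M - c *: (ones R n *m (ones R n)^T)) *m X = X.
Proof. by move=> H; rewrite mulmxBl mul1mx -scalemxAl -mulmxA H mulmx0 scaler0 subr0. Qed.

Lemma fixR (R : realFieldType) n m c (mu : 'cV[R]_m) (X : 'M[R]_(n, m)) :
  X *m mu = 0 -> X *m (1%:M - c *: (mu *m mu^T)) = X.
Proof. by move=> H; rewrite mulmxBr mulmx1 -scalemxAr mulmxA H mul0mx scaler0 subr0. Qed.

Lemma DDi (R : realFieldType) N (mu : 'cV[R]_N) :
  (forall i, 0 < mu i 0) ->
  diag_mx mu^T *m diag_mx (\row_i (mu i 0)^-1) = 1%:M.
Proof.
move=> H; rewrite mulmx_diag -diag_const_mx; congr diag_mx; apply/rowP => i.
rewrite !mxE mulfV // gt_eqF //.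
Qed.

Lemma muDi (R : realFieldType) N (mu : 'cV[R]_N) :
  (forall i, 0 < mu i 0) ->
  mu^T *m diag_mx (\row_i (mu i 0)^-1) = (ones R N)^T.
Proof.
move=> H; rewrite mul_mx_diag; apply/matrixP => i j.
rewrite (ord1 i) !mxE mulfV // gt_eqF //.
Qed.

Lemma umu (R : realFieldType) N (mu : 'cV[R]_N) :
  \sum_i mu i 0 = 1 -> (ones R N)^T *m mu = 1%:M.
Proof.
move=> H; apply/matrixP => i j; rewrite (ord1 i) (ord1 j) !mxE -H.
by apply: eq_bigr => k _; rewrite !mxE mul1r.
Qed.

Lemma kill (R : realFieldType) N (mu : 'cV[R]_N) (M : 'M[R]_N) :
  \sum_i mu i 0 = 1 -> M *m mu = mu -> (ones R N)^T *m M = (ones R N)^T ->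
  (M - mu *m (ones R N)^T) *m mu = 0 /\ (ones R N)^T *m (M - mu *m (ones R N)^T) = 0.
Proof.
move=> H1 HM HuM; split.
  by rewrite mulmxBl HM -mulmxA umu // mulmx1 subrr.
by rewrite mulmxBr HuM mulmxA umu // mul1mx subrr.
Qed.

Lemma part1 (R : realFieldType) (N T : nat)
  (P : 'M[R]_N) (mu : 'cV[R]_N) (Q : 'M[R]_(T, N))
  (V : 'M[R]_N) (A : 'M[R]_(T, N))
  (HP1 : forall j, \sum_i P i j = 1)
  (Hmu0 : forall i, 0 < mu i 0)
  (Hmu1 : \sum_i mu i 0 = 1)
  (HPmu : P *m mu = mu)
  (HQ1 : forall k, \sum_t Q t k = 1)
  (HV1 : (ones R N)^T *m V = (ones R N)^T)
  (HVmu : V *m mu = mu)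
  (HA1 : (ones R T)^T *m A = (ones R N)^T) :
  Expect P mu Q (fun xs k o => precV mu (gradV V A xs k o))
    = mu_ip mu A A *: (V - mu *m (ones R N)^T)
      - mu_ip mu Q A *: (P - mu *m (ones R N)^T).
Proof.
rewrite Expect_precV E0V //.
set S := mu_ip mu A A; set Rr := mu_ip mu Q A.
have HuP : (ones R N)^T *m P = (ones R N)^T.
  apply/matrixP => i j; rewrite (ord1 i) !mxE -(HP1 j).
  by apply: eq_bigr => k _; rewrite !mxE mul1r.
have Hdi : (S *: (V *m diag_mx mu^T - mu *m mu^T) - Rr *: (P *m diag_mx mu^T - mu *m mu^T))
    *m diag_mx (\row_i (mu i 0)^-1)
  = S *: (V - mu *m (ones R N)^T) - Rr *: (P - mu *m (ones R N)^T).
  by rewrite mulmxBl -!scalemxAl !mulmxBl -!mulmxA DDi // muDi // !mulmx1.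
have [HV2 HV3] := kill _ _ _ _ Hmu1 HVmu HV1.
have [HP2 HP3] := kill _ _ _ _ Hmu1 HPmu HuP.
have HY1 : (S *: (V - mu *m (ones R N)^T) - Rr *: (P - mu *m (ones R N)^T)) *m mu = 0.
  by rewrite mulmxBl -!scalemxAl HV2 HP2 !scaler0 subrr.
have HY2 : (ones R N)^T *m (S *: (V - mu *m (ones R N)^T) - Rr *: (P - mu *m (ones R N)^T)) = 0.
  by rewrite mulmxBr -!scalemxAr HV3 HP3 !scaler0 subrr.
rewrite /precV -(mulmxA _ _ (diag_mx _)) Hdi fixR; last by rewrite -mulmxA HY1 mulmx0.
by rewrite fixL.
Qed.

Lemma sum_o_grada (R : realFieldType) N T (P : 'M[R]_N) mu (Q : 'M[R]_(T, N)) V A xs k :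
  (forall j, \sum_i P i j = 1) -> (forall k, \sum_t Q t k = 1) ->
  \sum_o dprob P mu Q xs k o *: - ((V *m Xmat R xs)^T *m resid V A xs k o)
  = ((\prod_t mu (xs t) 0) * mu k 0) *:
     ((Xmat R xs)^T *m (V^T *m V) *m Xmat R xs *m col k A
      - (Xmat R xs)^T *m (V^T *m P) *m Xmat R xs *m col k Q).
Proof.
move=> HP1 HQ1.
have Hg : forall o, - ((V *m Xmat R xs)^T *m resid V A xs k o)
   = (V *m Xmat R xs)^T *m (V *m Xmat R xs *m col k A) - (V *m Xmat R xs)^T *m ecol R o.
  by move=> o; rewrite /resid mulmxBr opprB.
under [LHS]eq_bigr do rewrite Hg scalerBr.
rewrite sumrB -scaler_suml sum_o_dprob //.
have -> : \sum_o dprob P mu Q xs k o *: ((V *m Xmat R xs)^T *m ecol R o)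
   = (V *m Xmat R xs)^T *m (\sum_o dprob P mu Q xs k o *: ecol R o).
  by rewrite mulmx_sumr; apply: eq_bigr => o _; rewrite scalemxAr.
rewrite sum_o_ecol -scalemxAr -scalerBr; congr (_ *: _).
by rewrite !trmx_mul !mulmxA.
Qed.

Lemma preca_sum (R : realFieldType) N T (mu : 'cV[R]_N) j (I : finType) (F : I -> 'cV[R]_T) :
  preca mu j (\sum_i F i) = \sum_i preca mu j (F i).
Proof. by rewrite /preca mulmx_sumr scaler_sumr. Qed.

Lemma preca_scale (R : realFieldType) N T (mu : 'cV[R]_N) j c (G : 'cV[R]_T) :
  preca mu j (c *: G) = c *: preca mu j G.
Proof. by rewrite /preca -scalemxAr !scalerA mulrC. Qed.

Lemma Expect_preca (R : realFieldType) N T (P : 'M[R]_N) mu (Q : 'M[R]_(T, N)) j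
  (F : {ffun 'I_T -> 'I_N} -> 'I_N -> 'I_N -> 'cV[R]_T) :
  Expect P mu Q (fun xs k o => preca mu j (F xs k o)) = preca mu j (Expect P mu Q F).
Proof.
rewrite /Expect preca_sum; apply: eq_bigr => xs _.
rewrite preca_sum; apply: eq_bigr => k _.
rewrite preca_sum; apply: eq_bigr => o _.
by rewrite preca_scale.
Qed.

Lemma sum_xs_scale2 (R : realFieldType) N T (c : R) (F : {ffun 'I_T -> 'I_N} -> R)
  (G1 G2 : {ffun 'I_T -> 'I_N} -> 'M[R]_T) (a q : 'cV[R]_T) :
  \sum_xs (F xs * c) *: (G1 xs *m a - G2 xs *m q)
  = c *: ((\sum_xs F xs *: G1 xs) *m a - (\sum_xs F xs *: G2 xs) *m q).
Proof.
rewrite !mulmx_suml -sumrB scaler_sumr; apply: eq_bigr => xs _.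
by rewrite mulrC -scalerA -!scalemxAl scalerBr.
Qed.

Lemma uTcol (R : realFieldType) T (a : 'cV[R]_T) :
  \sum_t a t 0 = 1 -> (ones R T)^T *m a = 1%:M.
Proof.
move=> H; apply/matrixP => i j; rewrite (ord1 i) (ord1 j) !mxE -H.
by apply: eq_bigr => k _; rewrite !mxE mul1r.
Qed.

Lemma MMt_apply (R : realFieldType) T (c d : R) (a : 'cV[R]_T) :
  \sum_t a t 0 = 1 ->
  (c *: (ones R T *m (ones R T)^T) + (d - c) *: 1%:M) *m a
  = c *: ones R T + (d - c) *: a.
Proof.
move=> H; rewrite mulmxDl -!scalemxAl -mulmxA uTcol // mulmx1 mul1mx //.
Qed.

Lemma part2 (R : realFieldType) (N T : nat)
  (P : 'M[R]_N) (mu : 'cV[R]_N) (Q : 'M[R]_(T, N))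
  (V : 'M[R]_N) (A : 'M[R]_(T, N))
  (HP1 : forall j, \sum_i P i j = 1)
  (Hmu0 : forall i, 0 < mu i 0)
  (Hmu1 : \sum_i mu i 0 = 1)
  (HPmu : P *m mu = mu)
  (HQ1 : forall k, \sum_t Q t k = 1)
  (HVmu : V *m mu = mu)
  (HA1 : (ones R T)^T *m A = (ones R N)^T) (j : 'I_N) :
    Expect P mu Q (fun xs k o => preca mu j (grada V A xs k o j))
      = (mu_ip mu V V - sqnorm mu) *: (col j A - (T%:R)^-1 *: ones R T)
        - (mu_ip mu V P - sqnorm mu) *: (col j Q - (T%:R)^-1 *: ones R T).
Proof.
rewrite Expect_preca /Expect exchange_big /= (bigD1 j) //= [X in _ + X]big1 ?addr0; last first.
  move=> k Hk; apply: big1 => xs _; apply: big1 => o _.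
  by rewrite /grada (negbTE Hk) scaler0.
under [X in preca _ _ X]eq_bigr => xs _ do
  (under eq_bigr => o _ do rewrite /grada eqxx; rewrite sum_o_grada //).
rewrite (@sum_xs_scale2 _ _ _ (mu j 0) (fun xs => \prod_t mu (xs t) 0)).
rewrite !MMt //.
have HA : \sum_t (col j A) t 0 = 1.
  by rewrite -(@colsum _ _ _ A j HA1); apply: eq_bigr => t _; rewrite mxE.
have HQ : \sum_t (col j Q) t 0 = 1.
  by rewrite -(HQ1 j); apply: eq_bigr => t _; rewrite mxE.
rewrite !MMt_apply //.
have Hsq : (mu^T *m mu) 0 0 = sqnorm mu.
  by rewrite !mxE; apply: eq_bigr => i _; rewrite !mxE expr2.
have Hc1 : (mu^T *m (V^T *m V) *m mu) 0 0 = sqnorm mu.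
  by rewrite mulmxA -trmx_mul -mulmxA HVmu.
have Hc2 : (mu^T *m (V^T *m P) *m mu) 0 0 = sqnorm mu.
  by rewrite mulmxA -trmx_mul -mulmxA HVmu HPmu.
have Hd1 : \sum_i mu i 0 * (V^T *m V) i i = mu_ip mu V V.
  by rewrite mu_ipE; apply: eq_bigr => i _; rewrite !mxE; congr (_ * _);
     apply: eq_bigr => t _; rewrite !mxE.
have Hd2 : \sum_i mu i 0 * (V^T *m P) i i = mu_ip mu V P.
  by rewrite mu_ipE; apply: eq_bigr => i _; rewrite !mxE; congr (_ * _);
     apply: eq_bigr => t _; rewrite !mxE.
rewrite Hc1 Hc2 Hd1 Hd2 preca_scale /preca scalerA mulfV ?gt_eqF // scale1r.
rewrite opprD addrACA subrr add0r.
have HL : forall a : 'cV[R]_T, \sum_t a t 0 = 1 ->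
   (1%:M - T%:R^-1 *: (ones R T *m (ones R T)^T)) *m a = a - T%:R^-1 *: ones R T.
  by move=> a Ha; rewrite mulmxBl mul1mx -scalemxAl -mulmxA uTcol // mulmx1.
by rewrite mulmxDr mulmxN -!scalemxAr !HL.
Qed.


Theorem lemmaB8 (R : realFieldType) (N T : nat)
  (P : 'M[R]_N) (mu : 'cV[R]_N) (Q : 'M[R]_(T, N))
  (V : 'M[R]_N) (A : 'M[R]_(T, N))
  (HP0 : forall i j, 0 <= P i j)
  (HP1 : forall j, \sum_i P i j = 1)
  (Hmu0 : forall i, 0 < mu i 0)
  (Hmu1 : \sum_i mu i 0 = 1)
  (HPmu : P *m mu = mu)
  (HQ0 : forall t k, 0 <= Q t k)
  (HQ1 : forall k, \sum_t Q t k = 1)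
  (HV1 : (ones R N)^T *m V = (ones R N)^T)
  (HVmu : V *m mu = mu)
  (HA1 : (ones R T)^T *m A = (ones R N)^T) :
  Expect P mu Q (fun xs k o => precV mu (gradV V A xs k o))
    = mu_ip mu A A *: (V - mu *m (ones R N)^T)
      - mu_ip mu Q A *: (P - mu *m (ones R N)^T)
  /\
  forall j : 'I_N,
    Expect P mu Q (fun xs k o => preca mu j (grada V A xs k o j))
      = (mu_ip mu V V - sqnorm mu) *: (col j A - (T%:R)^-1 *: ones R T)
        - (mu_ip mu V P - sqnorm mu) *: (col j Q - (T%:R)^-1 *: ones R T).
Proof.
split; first exact: part1.
by move=> j; apply: part2.
Qed.
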